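(* Let $R$ and $B$ be disjoint finite sets of points in the plane such that no three points of $R\cup B$ are collinear, and let $f:R\to\{2,3,4,\ldots\}$ be a function. If $2\le |B|\le \sum_{x\in R}(f(x)-2)+2$, then there exists a non-crossing geometric spanning tree $T$ on $R\cup B$ such that the set of leaves of $T$ is exactly $B$ and $2\le \deg_T(x)\le f(x)$ for every $x\in R$. Moreover, if $|B|=\sum_{x\in R}(f(x)-2)+2$, then $T$ satisfies $\deg_T(x)=f(x)$ for every $x\in R$.
   Context: The points of $R$ are called red and those of $B$ blue. A geometric spanning tree on a point set $P$ is a tree with vertex set $P$ whose edges are drawn as straight-line segments between their endpoints; it is non-crossing if no two edges intersect except at a common endpoint. $\deg_T(v)$ denotes the degree of vertex $v$ in $T$, and a leaf is a vertex of degree one. *)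

(* Defs.v *)
From HB Require Import structures.
From mathcomp Require Import all_boot all_order all_algebra.
From mathcomp Require Import reals.
Set Implicit Arguments. Unset Strict Implicit. Unset Printing Implicit Defensive.
Import Order.TTheory GRing.Theory Num.Theory.
Local Open Scope ring_scope.

Section Geom.
Variable R : realType.
Definition point := (R * R)%type.

Definition collinear (a b c : point) : bool :=
  (b.1 - a.1) * (c.2 - a.2) - (b.2 - a.2) * (c.1 - a.1) == 0.

Definition no_three_collinear (P : seq point) : Prop :=
  forall a b c, a \in P -> b \in P -> c \in P ->
    a != b -> b != c -> a != c -> ~~ collinear a b c.

Definition on_segment (a b p : point) : Prop :=
  exists t : R, 0 <= t <= 1 /\
    p = ((1 - t) * a.1 + t * b.1, (1 - t) * a.2 + t * b.2).

(* Edges of a geometric graph: a list of (unordered) pairs of points. *)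
Definition adj (T : seq (point * point)) (x y : point) : bool :=
  ((x, y) \in T) || ((y, x) \in T).

Definition deg (T : seq (point * point)) (v : point) : nat :=
  count (fun e => (e.1 == v) || (e.2 == v)) T.

Definition simple_graph_on (P : seq point) (T : seq (point * point)) : Prop :=
  [/\ forall e, e \in T -> [/\ e.1 \in P, e.2 \in P & e.1 != e.2],
      uniq T &
      forall e, e \in T -> (e.2, e.1) \notin T].

Definition connected_on (P : seq point) (T : seq (point * point)) : Prop :=
  forall x y, x \in P -> y \in P ->
    exists p : seq point, path (adj T) x p /\ last x p = y.

Definition acyclic (T : seq (point * point)) : Prop :=
  forall c : seq point, (3 <= size c)%N -> uniq c -> ~~ cycle (adj T) c.

Definition spanning_tree (P : seq point) (T : seq (point * point)) : Prop :=
  [/\ simple_graph_on P T, connected_on P T & acyclic T].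

Definition non_crossing (T : seq (point * point)) : Prop :=
  forall e1 e2, e1 \in T -> e2 \in T -> e1 != e2 ->
    forall p, on_segment e1.1 e1.2 p -> on_segment e2.1 e2.2 p ->
      ((p == e1.1) || (p == e1.2)) && ((p == e2.1) || (p == e2.2)).

End Geom.

(* Main.v *)
Require Import Defs.
From HB Require Import structures.
From mathcomp Require Import all_boot all_order all_algebra.
From mathcomp Require Import reals.
From mathcomp Require Import ring lra zify.
Set Implicit Arguments. Unset Strict Implicit. Unset Printing Implicit Defensive.
Import Order.TTheory GRing.Theory Num.Theory.
Local Open Scope ring_scope.

Ltac clean_lia := repeat match goal with
 | H : ?T |- _ => lazymatch T with
     | is_true (leq _ _) => fail
     | @eq nat _ _ => fail
     | _ => lazymatch type of T with Prop => clear H end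
   end
 end; lia.

Section G.
Variable R : realType.
Notation point := (point R).

Definition affine (s : point -> R) := forall (a b : point) t,
  s ((1 - t) * a.1 + t * b.1, (1 - t) * a.2 + t * b.2) = (1 - t) * s a + t * s b.

Lemma seg0 (s : point -> R) a b x : affine s -> on_segment a b x -> 0 <= s a -> 0 <= s b ->
  0 <= s x /\ (s x = 0 -> [\/ x = a, x = b | s a = 0 /\ s b = 0]).
Proof.
move=> Hs [t [/andP[t0 t1] ->]] sa sb; rewrite Hs; split; first by nra.
move=> H0.
have [->|tn0] := eqVneq t 0.
  by constructor 1; case: a {sa H0} => a1 a2 /=; congr pair; ring.
have [->|tn1] := eqVneq t 1.
  by constructor 2; case: b {sb H0} => b1 b2 /=; congr pair; ring.
constructor 3.
have tp : 0 < t by rewrite lt_def tn0 t0.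
have tq : t < 1 by rewrite lt_def eq_sym tn1 t1.
split; nra.
Qed.

Lemma affineN s : affine s -> affine (fun z => - s z).
Proof. by move=> Hs a b t; rewrite Hs; ring. Qed.

Lemma deg0 (P : seq point) (T : seq (point * point)) v : simple_graph_on P T -> v \notin P -> deg T v = 0%N.
Proof.
case=> He _ _ vP; rewrite /deg (eq_in_count (a2 := pred0)) ?count_pred0 //.
move=> e /He [h1 h2 _] /=; apply/negbTE; apply/negP => /orP[] /eqP E.
  by rewrite -E h1 in vP.
by rewrite -E h2 in vP.
Qed.

Lemma path_side (T : eqType) (e : rel T) (f : T -> bool) (Q : pred T) :
  (forall u v, Q u -> Q v -> e u v -> f u = f v) ->
  forall x s, all Q (x :: s) -> path e x s -> all (fun y => f y == f x) s.
Proof.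
move=> H x s; elim: s x => //= y s IH x /and3P[Qx Qy Qs] /andP[exy ps].
have fxy := H _ _ Qx Qy exy.
apply/andP; split; first by rewrite fxy.
have := IH y; rewrite /= Qy Qs => /(_ isT ps) A.
apply: (sub_all _ A) => z /eqP ->; by rewrite fxy.
Qed.

Lemma adj_sub (T1 T2 : seq (point * point)) : subrel (adj T1) (adj (T1 ++ T2)).
Proof. by move=> u v; rewrite /adj !mem_cat; case/orP => ->; rewrite ?orbT. Qed.
Lemma adj_sub2 (T1 T2 : seq (point * point)) : subrel (adj T2) (adj (T1 ++ T2)).
Proof. by move=> u v; rewrite /adj !mem_cat; case/orP => ->; rewrite ?orbT. Qed.

Section Combine.
Variables (P P1 P2 : seq point) (T1 T2 : seq (point * point)) (c p' : point) (s : point -> R).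
Hypotheses (Hs : affine s) (HT1 : spanning_tree P1 T1) (HT2 : spanning_tree P2 T2)
  (HN1 : non_crossing T1) (HN2 : non_crossing T2)
  (cP1 : c \in P1) (cP2 : c \in P2) (HI : forall x, x \in P1 -> x \in P2 -> x = c)
  (HP : forall x, (x \in P) = (x \in P1) || (x \in P2))
  (HS1 : forall x, x \in P1 -> 0 <= s x) (HS2 : forall x, x \in P2 -> s x <= 0)
  (HZ2 : forall x, x \in P2 -> s x = 0 -> x = c)
  (HZ1 : forall x, x \in P1 -> s x = 0 -> x = p' \/ x = c).

Lemma E1 e : e \in T1 -> [/\ e.1 \in P1, e.2 \in P1 & e.1 != e.2].
Proof. by case: HT1 => [[H _ _] _ _] /H. Qed.
Lemma E2 e : e \in T2 -> [/\ e.1 \in P2, e.2 \in P2 & e.1 != e.2].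
Proof. by case: HT2 => [[H _ _] _ _] /H. Qed.

Lemma adjE u v : adj (T1 ++ T2) u v ->
  u != v /\ ((u \in P1) && (v \in P1) || (u \in P2) && (v \in P2)).
Proof.
rewrite /adj !mem_cat => /orP[/orP[]|/orP[]].
- by move/E1 => /= [-> -> ->].
- by move/E2 => /= [-> -> ->]; rewrite orbT.
- by move/E1 => /= [-> ->]; rewrite eq_sym => ->.
- by move/E2 => /= [-> ->]; rewrite eq_sym => ->; rewrite orbT.
Qed.

Lemma adj1 u v : u \in P1 -> v \in P1 -> adj (T1 ++ T2) u v -> adj T1 u v.
Proof.
move=> uP vP; rewrite /adj !mem_cat => /orP[/orP[]|/orP[]] H; rewrite ?H ?orbT //.
- case/E2: H => /= a b /negP []; move: (HI uP a) (HI vP b) => -> ->; done.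
- case/E2: H => /= a b /negP []; move: (HI uP b) (HI vP a) => -> ->; done.
Qed.
Lemma adj2 u v : u \in P2 -> v \in P2 -> adj (T1 ++ T2) u v -> adj T2 u v.
Proof.
move=> uP vP; rewrite /adj !mem_cat => /orP[/orP[]|/orP[]] H; rewrite ?H ?orbT //.
- case/E1: H => /= a b /negP []; move: (HI a uP) (HI b vP) => -> ->; done.
- case/E1: H => /= a b /negP []; move: (HI b uP) (HI a vP) => -> ->; done.
Qed.

Lemma cross12 e1 e2 x : e1 \in T1 -> e2 \in T2 ->
  on_segment e1.1 e1.2 x -> on_segment e2.1 e2.2 x ->
  ((x == e1.1) || (x == e1.2)) && ((x == e2.1) || (x == e2.2)).
Proof.
move=> /E1 [a1 b1 n1] /E2 [a2 b2 n2] S1 S2.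
have [sx1 Z1] := seg0 Hs S1 (HS1 a1) (HS1 b1).
have a2' : 0 <= - s e2.1 by rewrite oppr_ge0 HS2.
have b2' : 0 <= - s e2.2 by rewrite oppr_ge0 HS2.
have [sx2 Z2] := seg0 (affineN Hs) S2 a2' b2'.
have sx0 : s x = 0 by apply/eqP; rewrite eq_le sx1 andbT -oppr_ge0.
have : x = c /\ ((x == e2.1) || (x == e2.2)).
  have Zx : - s x = 0 by rewrite sx0 oppr0.
  case: (Z2 Zx) => [|| [/eqP]].
  - by move=> E; rewrite E eqxx; split=> //; apply: HZ2 a2 _; rewrite -E.
  - by move=> E; rewrite E eqxx orbT; split=> //; apply: HZ2 b2 _; rewrite -E.
  - rewrite oppr_eq0 => /eqP h1 /eqP; rewrite oppr_eq0 => /eqP h2.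
    by move: n2; rewrite (HZ2 a2 h1) (HZ2 b2 h2) eqxx.
case=> xc ->; rewrite andbT.
case: (Z1 sx0) => [->|->|[h1 h2]]; rewrite ?eqxx ?orbT //.
rewrite xc; case: (HZ1 a1 h1) => [E|->]; rewrite ?eqxx //.
case: (HZ1 b1 h2) => [E'|->]; rewrite ?eqxx ?orbT //.
by move: n1; rewrite E E' eqxx.
Qed.


Lemma memT e : e \in T1 ++ T2 -> e.1 \in P /\ e.2 \in P.
Proof.
rewrite mem_cat HP HP => /orP[/E1[-> -> _]|/E2[-> -> _]]; by rewrite ?orbT.
Qed.

Lemma combine_simple : simple_graph_on P (T1 ++ T2).
Proof.
case: HT1 => [[_ U1 R1] _ _]; case: HT2 => [[_ U2 R2] _ _].
split.
- move=> e He; have [h1 h2] := memT He; split=> //.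
  by move: He; rewrite mem_cat => /orP[/E1[]|/E2[]].
- rewrite cat_uniq U1 U2 /= andbT; apply/hasPn => e /E2 [a2 b2 n2].
  apply/negP => /E1 [a1 b1 _]; move: n2.
  by rewrite (HI a1 a2) (HI b1 b2) eqxx.
- move=> e; rewrite !mem_cat => /orP[H|H]; apply/negP => /orP[H'|H'].
  + by move: (R1 e H); rewrite H'.
  + case/E1: H => a1 b1 n1; case/E2: H' => /= b2 a2 _; move: n1.
    by rewrite (HI a1 a2) (HI b1 b2) eqxx.
  + case/E2: H => a2 b2 n2; case/E1: H' => /= b1 a1 _; move: n2.
    by rewrite (HI a1 a2) (HI b1 b2) eqxx.
  + by move: (R2 e H); rewrite H'.
Qed.

Lemma combine_conn : connected_on P (T1 ++ T2).
Proof.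
case: HT1 => [_ C1 _]; case: HT2 => [_ C2 _].
have L1 x p : path (adj T1) x p -> path (adj (T1 ++ T2)) x p.
  by apply: sub_path; apply: adj_sub.
have L2 x p : path (adj T2) x p -> path (adj (T1 ++ T2)) x p.
  by apply: sub_path; apply: adj_sub2.
move=> x y; rewrite !HP => /orP[x1|x2] /orP[y1|y2].
- by have [p [pp lp]] := C1 x y x1 y1; exists p; split=> //; apply: L1.
- have [p [pp lp]] := C1 x c x1 cP1; have [q [pq lq]] := C2 c y cP2 y2.
  exists (p ++ q); rewrite cat_path last_cat lp L1 //=; split=> //.
  by apply: L2.
- have [p [pp lp]] := C2 x c x2 cP2; have [q [pq lq]] := C1 c y cP1 y1.
  exists (p ++ q); rewrite cat_path last_cat lp L2 //=; split=> //.
  by apply: L1.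
- by have [p [pp lp]] := C2 x y x2 y2; exists p; split=> //; apply: L2.
Qed.

Lemma combine_acyclic : acyclic (T1 ++ T2).
Proof.
case: HT1 => [_ _ A1]; case: HT2 => [_ _ A2].
move=> cy Hsz Hu; apply/negP => Hcy.
have inP x : x \in cy -> (x \in P1) || (x \in P2).
  move=> xc; have := next_cycle Hcy xc; case/adjE => _ /orP[/andP[->]|/andP[->]] //.
  by rewrite orbT.
have side u v : (fun z => (z != c) && ((z \in P1) || (z \in P2))) u ->
    (fun z => (z != c) && ((z \in P1) || (z \in P2))) v ->
    adj (T1 ++ T2) u v -> (u \in P1) = (v \in P1).
  move=> /andP[uc _] /andP[vc _] /adjE [_ /orP[/andP[-> ->] //|/andP[u2 v2]]].
  apply/idP/idP => h; [by move: uc; rewrite (HI h u2) eqxx|by move: vc; rewrite (HI h v2) eqxx].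
have [y0 [s0 [Hsub [Hall Hpath]]]] : exists y0 s0, (forall z, z \in cy -> z \in [:: c, y0 & s0]) /\ (all (fun z => (z != c) && ((z \in P1) || (z \in P2))) (y0 :: s0) /\ path (adj (T1 ++ T2)) y0 s0).
  case: (boolP (c \in cy)) => cc.
    case: (rot_to cc) => i s' E.
    have Hc' : cycle (adj (T1 ++ T2)) (c :: s') by rewrite -E rot_cycle.
    have Hu' : uniq (c :: s') by rewrite -E rot_uniq.
    have Hs' : (2 <= size s')%N by move: Hsz; rewrite -(size_rot i) E.
    case: s' E Hc' Hu' Hs' => [|y0 s0] // E Hc' Hu' _.
    exists y0, s0; split.
      by move=> z; rewrite -(mem_rot i) E.
    have pp : path (adj (T1 ++ T2)) y0 s0.
      by move: Hc' => /= /andP[_]; rewrite rcons_path => /andP[].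
    split=> //.
    apply/allP => z zin; have zc : z \in cy by rewrite -(mem_rot i) E in_cons zin orbT.
    rewrite inP // andbT; apply/eqP => ezc; move: Hu'.
    by rewrite cons_uniq -ezc zin.
  case: cy Hsz Hu Hcy inP cc => [|y0 s0] // Hsz Hu Hcy inP cc.
  exists y0, s0; split.
    by move=> z zin; rewrite in_cons zin orbT.
  have pp : path (adj (T1 ++ T2)) y0 s0.
    by move: Hcy => /=; rewrite rcons_path => /andP[].
  split=> //.
  apply/allP => z zin; rewrite inP // andbT; apply/eqP => ezc; move: cc.
  by rewrite -ezc zin.
have HS := path_side side Hall Hpath.
have Hy0 := allP Hall y0 (mem_head _ _); move: Hy0 => /andP[_ y012].
case: (boolP (y0 \in P1)) => y1.
  have allP1 : all (fun z => z \in P1) cy.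
    apply/allP => z /Hsub; rewrite !inE => /orP[/eqP -> //|/orP[/eqP -> //|zs]].
    by have := allP HS z zs => /eqP ->.
  have := A1 cy Hsz Hu; rewrite (sub_in_cycle _ allP1 Hcy) //.
  by move=> u v; apply: adj1.
have allP2 : all (fun z => z \in P2) cy.
  apply/allP => z /Hsub; rewrite !inE => /orP[/eqP -> //|/orP[/eqP ->|zs]].
    by move: y012; rewrite (negbTE y1).
  have := allP HS z zs => /eqP; rewrite (negbTE y1) => z1.
  have := allP Hall z; rewrite inE zs orbT z1 => /(_ isT) /andP[_ //].
have := A2 cy Hsz Hu; rewrite (sub_in_cycle _ allP2 Hcy) //.
by move=> u v; apply: adj2.
Qed.

Lemma combine_nc : non_crossing (T1 ++ T2).
Proof.
move=> e1 e2; rewrite !mem_cat => /orP[H1|H1] /orP[H2|H2] ne x S1 S2.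
- exact: HN1.
- exact: cross12.
- by rewrite andbC; apply: cross12.
- exact: HN2.
Qed.

Lemma combine_deg v : deg (T1 ++ T2) v = (deg T1 v + deg T2 v)%N.
Proof. by rewrite /deg count_cat. Qed.


End Combine.
Lemma step (P P1 P2 : seq point) (c p' : point) (s : point -> R) (d d1 d2 : point -> nat) :
  affine s -> c \in P1 -> c \in P2 ->
  (forall x, (x \in P) = (x \in P1) || (x \in P2)) ->
  (forall x, x \in P1 -> 0 <= s x) -> (forall x, x \in P2 -> s x <= 0) ->
  (forall x, x \in P2 -> s x = 0 -> x = c) ->
  (forall x, x \in P1 -> s x = 0 -> x = p' \/ x = c) ->
  (exists T1, [/\ spanning_tree P1 T1, non_crossing T1 & forall v, v \in P1 -> deg T1 v = d1 v]) ->
  (exists T2, [/\ spanning_tree P2 T2, non_crossing T2 & forall v, v \in P2 -> deg T2 v = d2 v]) ->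
  (forall v, v \in P1 -> v != c -> d v = d1 v) ->
  (forall v, v \in P2 -> v != c -> d v = d2 v) ->
  d c = (d1 c + d2 c)%N ->
  exists T, [/\ spanning_tree P T, non_crossing T & forall v, v \in P -> deg T v = d v].
Proof.
move=> Hs cP1 cP2 HP HS1 HS2 HZ2 HZ1 [T1 [ST1 N1 D1]] [T2 [ST2 N2 D2]] E1 E2 Ec.
have HI x : x \in P1 -> x \in P2 -> x = c.
  move=> x1 x2; apply: HZ2 => //; apply/eqP; rewrite eq_le HS2 //=; exact: HS1.
exists (T1 ++ T2); split.
- split; [exact: combine_simple ST1 ST2 HI HP | exact: combine_conn ST1 ST2 cP1 cP2 HP |
          exact: combine_acyclic ST1 ST2 cP1 cP2 HI].
- exact: combine_nc Hs ST1 ST2 N1 N2 HS1 HS2 HZ2 HZ1.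
- move=> v; rewrite combine_deg HP => /orP[v1|v2].
  + have [->|vc] := eqVneq v c; first by rewrite D1 // D2.
    rewrite D1 // (@deg0 P2) ?E1 ?addn0 //; first by case: ST2.
    by apply/negP => v2; move: vc; rewrite (HI v v1 v2) eqxx.
  + have [->|vc] := eqVneq v c; first by rewrite D1 // D2.
    rewrite D2 // (@deg0 P1) ?E2 ?add0n //; first by case: ST1.
    by apply/negP => v1; move: vc; rewrite (HI v v1 v2) eqxx.
Qed.

Lemma base (a b : point) : a != b ->
  [/\ spanning_tree [:: a; b] [:: (a, b)], non_crossing [:: (a, b)] &
      forall v, v \in [:: a; b] -> deg [:: (a, b)] v = 1%N].
Proof.
move=> ab; split.
- split.
  + split.
    * by move=> e; rewrite inE => /eqP -> /=; rewrite !inE !eqxx ab orbT.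
    * by [].
    * move=> e; rewrite inE => /eqP -> /=; rewrite inE; apply/negP => /eqP [E _].
      by move: ab; rewrite E eqxx.
  + move=> x y; rewrite !inE => Hx Hy.
    have [->|xy] := eqVneq x y; first by exists [::].
    exists [:: y]; split=> //=; rewrite andbT /adj !inE.
    by case/orP: Hx => /eqP Ex; case/orP: Hy => /eqP Ey; subst x y;
      rewrite ?eqxx ?orbT //; move: xy; rewrite eqxx.
  + move=> cy Hsz Hu; apply/negP => Hcy.
    have sub : {subset cy <= [:: a; b]}.
      move=> x xc; have := next_cycle Hcy xc; rewrite /adj !inE.
      by case/orP => /eqP [E1 E2]; rewrite ?E1 ?E2 eqxx ?orbT.
    by have := uniq_leq_size Hu sub; rewrite leqNgt Hsz.
- move=> e1 e2; rewrite !inE => /eqP -> /eqP ->; by rewrite eqxx.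
- move=> v; rewrite !inE /deg /= => /orP[]/eqP ->; rewrite eqxx ?orbT //=.
Qed.

Definition cr3 (o a b : point) : R := (a.1 - o.1) * (b.2 - o.2) - (a.2 - o.2) * (b.1 - o.1).
Definition Hp (o v : point) : bool := (o.1 < v.1) || ((o.1 == v.1) && (o.2 < v.2)).

Lemma cr3_anti o a b : cr3 o a b = - cr3 o b a.
Proof. rewrite /cr3; ring. Qed.
Lemma cr3_self o a : cr3 o a a = 0.
Proof. rewrite /cr3; ring. Qed.
Lemma cr3_o o a : cr3 o o a = 0.
Proof. rewrite /cr3; ring. Qed.

Lemma cr3_trans o a b c : Hp o a -> Hp o b -> Hp o c ->
  0 <= cr3 o a b -> 0 <= cr3 o b c -> 0 <= cr3 o a c.
Proof.
rewrite /Hp /cr3.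
move=> Ha Hb Hc hab hbc.
have A1 : 0 <= a.1 - o.1 by case/orP: Ha => [h|/andP[/eqP -> _]]; lra.
have C1 : 0 <= c.1 - o.1 by case/orP: Hc => [h|/andP[/eqP -> _]]; lra.
have id : (b.1 - o.1) * ((a.1 - o.1) * (c.2 - o.2) - (a.2 - o.2) * (c.1 - o.1)) =
   ((a.1 - o.1) * (b.2 - o.2) - (a.2 - o.2) * (b.1 - o.1)) * (c.1 - o.1) +
   ((b.1 - o.1) * (c.2 - o.2) - (b.2 - o.2) * (c.1 - o.1)) * (a.1 - o.1) by ring.
case/orP: Hb => [hb|/andP[/eqP hb1 hb2]].
  have : 0 <= (b.1 - o.1) * ((a.1 - o.1) * (c.2 - o.2) - (a.2 - o.2) * (c.1 - o.1)).
    rewrite id; apply: addr_ge0; apply: mulr_ge0 => //.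
  rewrite pmulr_rge0 //; lra.
rewrite -hb1 subrr mul0r sub0r in hbc.
rewrite -hb1 subrr mulr0 subr0 in hab.
have c1 : c.1 - o.1 = 0.
  apply/eqP; rewrite eq_le C1 andbT; rewrite oppr_ge0 in hbc.
  by rewrite -(pmulr_rle0 _ (_ : 0 < b.2 - o.2)) ?subr_gt0 // mulrC.
have c2 : 0 < c.2 - o.2.
  case/orP: Hc => [h|/andP[_ h]]; [lra | by rewrite subr_gt0].
rewrite c1 mulr0 subr0; apply: mulr_ge0 => //; lra.
Qed.

Lemma pt_neq (a b : point) : a != b -> (a.1 != b.1) || (a.2 != b.2).
Proof.
case: a b => a1 a2 [b1 b2] /=; apply: contraR; rewrite negb_or !negbK.
by case/andP => /eqP -> /eqP ->.
Qed.

Lemma Hp_total a b : a != b -> Hp a b || Hp b a.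
Proof.
rewrite /Hp => /pt_neq /orP[h|h].
  case: (ltgtP a.1 b.1) h => //= h _; rewrite ?orbT //.
case: (ltgtP a.1 b.1) => //= h1; rewrite ?orbT //.
by case: (ltgtP a.2 b.2) h => // ->; rewrite eqxx.
Qed.

Lemma Hp_trans a b c : Hp a b -> Hp b c -> Hp a c.
Proof.
rewrite /Hp => /orP[h|/andP[/eqP h1 h2]] /orP[h'|/andP[/eqP h1' h2']].
- by rewrite (lt_trans h h').
- by rewrite -h1' h.
- by rewrite h1 h'.
- by rewrite h1 h1' eqxx (lt_trans h2 h2') orbT.
Qed.

Lemma Hp_irr a : Hp a a = false.
Proof. by rewrite /Hp !ltxx eqxx. Qed.

Lemma lexmin (P : seq point) : P != [::] ->
  exists2 p, p \in P & forall x, x \in P -> x != p -> Hp p x.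
Proof.
elim: P => // x P' IH _.
case: (eqVneq P' [::]) => [->|ne].
  by exists x; rewrite ?inE // => y; rewrite inE => ->.
have [p' pP' Hp'] := IH ne.
case: (boolP (Hp p' x)) => hx.
  exists p'; first by rewrite inE pP' orbT.
  move=> y; rewrite inE => /orP[/eqP -> //|yP yp]; exact: Hp' y yP yp.
exists x; first by rewrite inE eqxx.
move=> y; rewrite inE => /orP[/eqP -> //|yP yx]; first by rewrite eqxx.
have [xp|xp'] := eqVneq x p'; first by rewrite xp; apply: Hp' => //; rewrite -xp.
have hx' : Hp x p' by move: (Hp_total xp'); rewrite (negbTE hx) orbF.
have [->|yp] := eqVneq y p'; first by [].
exact: Hp_trans hx' (Hp' y yP yp).
Qed.

Lemma ntc_sub (P P' : seq point) : {subset P' <= P} -> no_three_collinear P -> no_three_collinear P'.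
Proof. by move=> sub H a b c aP bP cP; apply: H; apply: sub. Qed.

Lemma angular (P : seq point) p : uniq P -> no_three_collinear P -> p \in P ->
  (forall x, x \in P -> x != p -> Hp p x) ->
  exists q, perm_eq P (p :: q) /\ pairwise (fun x y => 0 < cr3 p x y) q.
Proof.
move=> uP ntc pP Hmin.
set le := fun x y => 0 <= cr3 p x y.
set q := sort le (rem p P).
have memq x : (x \in q) = (x != p) && (x \in P).
  by rewrite (perm_mem (permEl (perm_sort le _))) (mem_rem_uniq _ uP) inE.
have uq : uniq q by rewrite sort_uniq rem_uniq.
exists q; split.
  apply: perm_trans (perm_to_rem pP) _; rewrite perm_cons perm_sym.
  exact: (permEl (perm_sort le _)).
have tot : total le.
  move=> x y; rewrite /le (cr3_anti p y x) oppr_ge0; exact: le_total.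
have sq : sorted le q by apply: sort_sorted.
have allH : all (Hp p) q.
  by apply/allP => x; rewrite memq => /andP[xp xP]; apply: Hmin.
have pq : pairwise le q.
  rewrite -(sorted_pairwise_in (P := Hp p)) //.
  move=> y x z hy hx hz; rewrite /le => h1 h2; exact: cr3_trans h1 h2.
have pq2 : pairwise [rel x y | le x y && (x != y)] q.
  by rewrite pairwise_relI pq -uniq_pairwise uq.
apply: (sub_in_pairwise (P := mem q)) pq2; last by apply/allP.
move=> x y xq yq /andP[hle hne]; rewrite lt_def (_ : 0 <= cr3 p x y) ?andbT //.
move: xq yq; rewrite !memq => /andP[xp xP] /andP[yp yP].
have := ntc p x y pP xP yP; rewrite eq_sym xp hne eq_sym yp => /(_ isT isT isT).
by rewrite /collinear /cr3.
Qed.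

Lemma crossC (a : nat -> int) t m : (t <= a 0%N)%R -> (a m < t)%R ->
  exists j, (j < m)%N /\ (t <= a j)%R /\ (a j.+1 < t)%R.
Proof.
elim: m => [|m IH] h0 hm; first by move: hm; rewrite ltNge h0.
case: (boolP (t <= a m)%R) => h; first by exists m.
have hm' : (a m < t)%R by rewrite ltNge.
have [j [jm hj]] := IH h0 hm'. by exists j; split=> //; apply: ltnW.
Qed.

Lemma crossU (a : nat -> int) t m : (a 0%N <= t)%R -> (t <= a m)%R -> (0 < m)%N ->
  exists j, (j < m)%N /\ (a j <= t)%R /\ (t <= a j.+1)%R.
Proof.
elim: m => [|m IH] h0 hm // _.
case: (boolP (a m <= t)%R) => h; first by exists m.
case: m IH hm h => [|m] IH hm h; first by move: h; rewrite h0.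
have hm' : (t <= a m.+1)%R by rewrite -ltNge in h; exact: ltW h.
have [j [jm hj]] := IH h0 hm' isT; by exists j; split=> //; apply: ltnW.
Qed.

Definition realizable (P : seq point) (d : point -> nat) :=
  exists T, [/\ spanning_tree P T, non_crossing T & forall v, v \in P -> deg T v = d v].

Lemma sum_ovr (s : seq point) x k (d : point -> nat) : x \notin s ->
  (\sum_(v <- s) (if v == x then k else d v) = \sum_(v <- s) d v)%N.
Proof.
move=> xs; apply: eq_big_seq => v vs; case: eqP => // E.
by move: xs; rewrite -E vs.
Qed.

Lemma pw_split p L c Rr : pairwise (fun x y => 0 < cr3 p x y) (L ++ c :: Rr) ->
  (forall x, x \in L -> 0 < cr3 p x c) /\ (forall x, x \in Rr -> cr3 p x c < 0).
Proof.
rewrite pairwise_cat => /and3P[H1 _ H3]; split.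
  by move=> x xL; have := allP H1 x xL => /= /andP[].
move=> x xR; move: H3 => /= /andP[/allP /(_ x xR) h _].
by rewrite cr3_anti oppr_lt0.
Qed.

Lemma affine_cr p c : affine (fun z => cr3 p z c).
Proof. move=> a b t; rewrite /cr3 /=; ring. Qed.
Lemma affine_cr2 p a b : affine (fun z => cr3 p z a + cr3 p z b).
Proof. move=> u v t; rewrite /cr3 /=; ring. Qed.



Section Step.
Variables (P q : seq point) (p : point) (d : point -> nat).
Hypotheses (memP : forall x, (x \in P) = (x == p) || (x \in q)) (uq : uniq (p :: q))
  (pq : pairwise (fun x y => 0 < cr3 p x y) q)
  (sumq : (d p + \sum_(v <- q) d v = 2 * size q)%N)
  (dpos : forall v, v \in P -> (0 < d v)%N)
  (rec : forall P' d', (size P' <= size q)%N -> (2 <= size P')%N -> uniq P' -> {subset P' <= P} ->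
      (forall v, v \in P' -> 0 < d' v)%N -> (\sum_(v <- P') d' v = 2 * size P' - 2)%N ->
      realizable P' d').

Lemma rec_use P' d' : subseq P' (p :: q) -> (size P' <= size q)%N -> (2 <= size P')%N ->
  (forall v, v \in P' -> 0 < d' v)%N -> (\sum_(v <- P') d' v = 2 * size P' - 2)%N ->
  realizable P' d'.
Proof.
move=> sub h1 h2 h3 h4; apply: rec => //; first exact: subseq_uniq sub uq.
by move=> x /(mem_subseq sub); rewrite memP in_cons.
Qed.

Lemma pnq : p \notin q.
Proof. by move: uq; rewrite cons_uniq => /andP[]. Qed.

Lemma case1 L a b Rr : q = L ++ a :: b :: Rr -> (2 <= d p)%N ->
  (\sum_(v <- L) d v = 2 * size L)%N -> d a = 1%N -> realizable P d.
Proof.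
move=> Eq dp2 sL da.
have pn := pnq; rewrite Eq in pn.
have sq := sumq; rewrite Eq big_cat !big_cons /= size_cat /= in sq.
have pq0 : pairwise (fun x y => 0 < cr3 p x y) (L ++ a :: b :: Rr) by rewrite -Eq.
have [HLa HRa] := pw_split pq0.
have pq' : pairwise (fun x y => 0 < cr3 p x y) ((L ++ [:: a]) ++ b :: Rr) by rewrite -catA -Eq.
have [HLb HRb] := pw_split pq'.
set d1 := fun v => if v == p then 1%N else d v.
set d2 := fun v => if v == p then (d p - 1)%N else d v.
set s := fun z => cr3 p z a + cr3 p z b.
have hab : 0 < cr3 p a b by apply: HLb; rewrite mem_cat mem_seq1 eqxx orbT.
have sL0 x : x \in L -> 0 < s x.
  by move=> xL; rewrite /s addr_gt0 // ?HLa // HLb // mem_cat xL.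
have sR0 x : x \in Rr -> s x < 0.
  move=> xR; rewrite /s -oppr_gt0 opprD addr_gt0 // oppr_gt0 ?HRb //.
  by apply: HRa; rewrite in_cons xR orbT.
have sa : 0 < s a by rewrite /s cr3_self add0r.
have sb : s b < 0 by rewrite /s cr3_self addr0 cr3_anti oppr_lt0.
have sp : s p = 0 by rewrite /s !cr3_o addr0.
apply: (@step P (p :: L ++ [:: a]) (p :: b :: Rr) p p s d d1 d2).
- exact: affine_cr2.
- exact: mem_head.
- exact: mem_head.
- move=> x; rewrite memP Eq !(in_cons, mem_cat, in_nil) orbF.
  by case: (x == p); case: (x \in L); case: (x == a); case: (x == b).
- move=> x; rewrite !(in_cons, mem_cat, in_nil) orbF => /or3P[/eqP->|/sL0/ltW//|/eqP->].
    by rewrite sp.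
  exact: ltW.
- move=> x; rewrite !in_cons => /or3P[/eqP->|/eqP->|/sR0/ltW//]; [by rewrite sp | exact: ltW].
- move=> x; rewrite !in_cons => /or3P[/eqP->//|/eqP->|/sR0]; last by move=> h E; move: h; rewrite E ltxx.
  by move=> E; move: sb; rewrite E ltxx.
- move=> x; rewrite !(in_cons, mem_cat, in_nil) orbF => /or3P[/eqP->|/sL0 h E|/eqP-> E]; [by left| |].
    by move: h; rewrite E ltxx.
  by move: sa; rewrite E ltxx.
- apply: rec_use.
  + rewrite Eq; apply: (cat_subseq (subseq_refl [:: p])); apply: cat_subseq; first exact: subseq_refl.
    exact: prefix_subseq.
  + rewrite Eq /= !size_cat /=. set k := size L. clean_lia.
  + by rewrite /= size_cat /=; clean_lia.
  + move=> v vP1; rewrite /d1; case: eqP => // _; apply: dpos; rewrite memP Eq.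
    by move: vP1; rewrite !(in_cons, mem_cat, in_nil) orbF => /or3P[->|->|->]; rewrite ?orbT.
  + rewrite big_cons /d1 eqxx sum_ovr; last first.
      by apply: contra pn; rewrite !(mem_cat, in_cons, in_nil) orbF => /orP[->|->]; rewrite ?orbT.
    rewrite big_cat big_seq1 /= size_cat /=; set k := size L; clean_lia.
- apply: rec_use.
  + have -> : p :: q = [:: p] ++ ((L ++ [:: a]) ++ b :: Rr) by rewrite Eq -catA.
    exact: (@cat_subseq _ [:: p] (b :: Rr) [:: p] _ (subseq_refl _) (suffix_subseq _ _)).
  + by rewrite Eq /= !size_cat /=; set k := size L; set k' := size Rr; clean_lia.
  + by [].
  + move=> v vP2; rewrite /d2; case: eqP => [_|_]; first by clean_lia.
    apply: dpos; rewrite memP Eq.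
    by move: vP2; rewrite !(in_cons, mem_cat, in_nil) => /or3P[->|->|->]; rewrite ?orbT.
  + rewrite big_cons /d2 eqxx sum_ovr; last first.
      by apply: contra pn; rewrite !(mem_cat, in_cons, in_nil) => /orP[->|->]; rewrite ?orbT.
    rewrite big_cons /=; set k := size L; set k' := size Rr; clean_lia.
- by move=> v _; rewrite /d1 => /negbTE ->.
- by move=> v _; rewrite /d2 => /negbTE ->.
- by rewrite /d1 /d2 eqxx; clean_lia.
Qed.

Lemma case2 c Rr : q = c :: Rr -> Rr != [::] -> d p = 1%N -> (2 <= d c)%N -> realizable P d.
Proof.
move=> Eq Rn dp dc.
have pn := pnq; rewrite Eq in pn.
have uq' := uq; rewrite Eq /= in uq'.
have cR : c \notin Rr by move: uq; rewrite Eq cons_uniq => /andP[_]; rewrite cons_uniq => /andP[].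
have pc : p != c by apply: contra pn => /eqP <-; rewrite mem_head.
have sq := sumq; rewrite Eq big_cons /= in sq.
have pq0 : pairwise (fun x y => 0 < cr3 p x y) ([::] ++ c :: Rr) by rewrite -Eq.
have [_ HR] := pw_split pq0.
set s := fun z => cr3 p z c.
set d2 := fun v => if v == c then (d c - 1)%N else d v.
have sp : s p = 0 by rewrite /s cr3_o.
have sc : s c = 0 by rewrite /s cr3_self.
apply: (@step P [:: p; c] (c :: Rr) c p s d (fun=> 1%N) d2).
- exact: affine_cr.
- by rewrite !inE eqxx orbT.
- exact: mem_head.
- move=> x; rewrite memP Eq !in_cons in_nil orbF.
  by case: (x == p); case: (x == c).
- by move=> x; rewrite !inE => /orP[] /eqP ->; rewrite ?sp ?sc.
- move=> x; rewrite in_cons => /orP[/eqP ->|/HR /ltW //]; by rewrite sc.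
- move=> x; rewrite in_cons => /orP[/eqP -> //|/HR h E]; by move: h E; rewrite /s => h E; rewrite E ltxx in h.
- by move=> x; rewrite !inE => /orP[] /eqP ->; [left|right].
- apply: rec_use => //.
  + rewrite Eq; exact: (@cat_subseq _ [:: p] [:: c] [:: p] (c :: Rr) (subseq_refl _) (prefix_subseq _ _)).
  + by rewrite Eq /=; case: Rr Rn {HR pn uq' cR sq pq0 Eq}.
  + by rewrite !big_cons big_nil.
- apply: rec_use.
  + by rewrite Eq; apply: subseq_cons.
  + by rewrite Eq.
  + by case: Rr Rn {HR pn uq' cR sq pq0 Eq}.
  + move=> v vP; rewrite /d2; case: eqP => _; first by clean_lia.
    by apply: dpos; rewrite memP Eq vP orbT.
  + rewrite big_cons /d2 eqxx sum_ovr //= ; set k := size Rr; clean_lia.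
- move=> v; rewrite !inE => /orP[] /eqP ->; [move=> _; exact: dp | by rewrite eqxx].
- by move=> v _; rewrite /d2 => /negbTE ->.
- by rewrite /d2 eqxx; clean_lia.
Qed.

Lemma case3 L c Rr X : q = L ++ c :: Rr -> L != [::] -> d p = 1%N -> (0 < X)%N -> (X < d c)%N ->
  (\sum_(v <- L) d v + X = 2 * size L)%N -> realizable P d.
Proof.
move=> Eq Ln dp X0 Xc sL.
have pn := pnq; rewrite Eq in pn.
have uq' := uq; rewrite Eq cons_uniq cat_uniq in uq'.
case/andP: uq' => _ /and3P[uL hL uR].
have cR : c \notin Rr by case/andP: uR.
have cL : c \notin L by apply: contra hL => cL; apply/hasP; exists c; rewrite ?mem_head.
have pc : p != c by apply: contra pn => /eqP <-; rewrite mem_cat mem_head orbT.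
have sq := sumq; rewrite Eq big_cat big_cons /= size_cat /= in sq.
have pq0 : pairwise (fun x y => 0 < cr3 p x y) (L ++ c :: Rr) by rewrite -Eq.
have szL : (0 < size L)%N by case: (L) Ln.
have [HL HR] := pw_split pq0.
set s := fun z => - cr3 p z c.
set dA := fun v => if v == c then (d c - X)%N else d v.
set dB := fun v => if v == c then X else d v.
have sp : s p = 0 by rewrite /s cr3_o oppr0.
have sc : s c = 0 by rewrite /s cr3_self oppr0.
have sgR x : x \in Rr -> 0 < s x by move=> /HR; rewrite /s oppr_gt0.
have sgL x : x \in L -> s x < 0 by move=> /HL; rewrite /s oppr_lt0.
apply: (@step P (p :: c :: Rr) (L ++ [:: c]) c p s d dA dB).
- exact: affineN (affine_cr p c).
- by rewrite !inE eqxx orbT.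
- by rewrite mem_cat mem_head orbT.
- move=> x; rewrite memP Eq !(in_cons, mem_cat, in_nil) orbF.
  by case: (x == p); case: (x \in L); case: (x == c); case: (x \in Rr).
- move=> x; rewrite !in_cons => /or3P[/eqP->|/eqP->|/sgR/ltW //]; by rewrite ?sp ?sc.
- move=> x; rewrite mem_cat mem_seq1 => /orP[/sgL/ltW //|/eqP ->]; by rewrite sc.
- move=> x; rewrite mem_cat mem_seq1 => /orP[/sgL h E|/eqP -> //]; by move: h; rewrite E ltxx.
- move=> x; rewrite !in_cons => /or3P[/eqP->|/eqP->|/sgR h E]; [by left|by right|].
  by move: h; rewrite E ltxx.
- apply: rec_use.
  + have -> : p :: q = [:: p] ++ (L ++ c :: Rr) by rewrite Eq.
    exact: (@cat_subseq _ [:: p] (c :: Rr) [:: p] _ (subseq_refl _) (suffix_subseq _ _)).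
  + rewrite Eq /= size_cat /=; set k := size Rr; set k' := size L; clean_lia.
  + by [].
  + move=> v vP; rewrite /dA; case: eqP => _; first by clean_lia.
    apply: dpos; rewrite memP Eq mem_cat !in_cons.
    by move: vP; rewrite !in_cons => /or3P[] ->; rewrite ?orbT.
  + rewrite !big_cons /dA eqxx (negbTE pc) sum_ovr //=; set k := size Rr; set k' := size L; clean_lia.
- apply: rec_use.
  + apply: (subseq_trans _ (subseq_cons _ p)); rewrite Eq.
    exact: (cat_subseq (subseq_refl L) (prefix_subseq [:: c] Rr)).
  + rewrite Eq !size_cat /=; set k := size Rr; set k' := size L; clean_lia.
  + rewrite size_cat /=; set k' := size L; clean_lia.
  + move=> v vP; rewrite /dB; case: eqP => _ //.
    apply: dpos; rewrite memP Eq; move: vP; rewrite !(in_cons, mem_cat, in_nil) orbF => /orP[->|->]; by rewrite ?(orTb, orbT).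
  + rewrite big_cat big_seq1 /dB eqxx sum_ovr // size_cat /=; set k' := size L; clean_lia.
- by move=> v _; rewrite /dA => /negbTE ->.
- by move=> v _; rewrite /dB => /negbTE ->.
- by rewrite /dA /dB eqxx; clean_lia.
Qed.

End Step.

Lemma take_sum (q : seq point) (d : point -> nat) i x0 : (i < size q)%N ->
  (\sum_(x <- take i.+1 q) d x = \sum_(x <- take i q) d x + d (nth x0 q i))%N.
Proof. by move=> h; rewrite (take_nth x0 h) -cats1 big_cat big_seq1. Qed.

Lemma realize n : forall (P : seq point) (d : point -> nat), size P = n -> (2 <= n)%N ->
  uniq P -> no_three_collinear P -> (forall v, v \in P -> 0 < d v)%N ->
  (\sum_(v <- P) d v = 2 * n - 2)%N -> realizable P d.
Proof.
elim: n {-2}n (leqnn n) => [|N IH] n hn P d sP h2 uP ntc dpos sum.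
  by move: hn h2; rewrite leqn0 => /eqP ->.
have [n2|n3] := eqVneq n 2.
  rewrite n2 in sP sum; case: P sP uP sum dpos {ntc} => [|a [|b [|? ?]]] //= _ uP sum dpos.
  have ab : a != b by move: uP; rewrite !inE andbT.
  rewrite !big_cons big_nil in sum.
  have bin : b \in [:: a; b] by rewrite !inE eqxx orbT.
  have da0 := dpos a (mem_head _ _); have db0 := dpos b bin.
  have da : d a = 1%N by clean_lia.
  have db : d b = 1%N by clean_lia.
  have [ST NC D] := base ab; exists [:: (a, b)]; split=> // v vP; rewrite D //.
  by move: vP; rewrite !inE => /orP[] /eqP ->.
have Pn : P != [::] by case: (P) sP h2 => // <-.
have [p pP Hmin] := lexmin Pn.
have [q [pe pw]] := angular uP ntc pP Hmin.
have memP x : (x \in P) = (x == p) || (x \in q) by rewrite (perm_mem pe) in_cons.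
have uq : uniq (p :: q) by rewrite -(perm_uniq pe).
have szq : size P = (size q).+1 by rewrite (perm_size pe).
have sumq : (d p + \sum_(v <- q) d v = 2 * size q)%N.
  by rewrite (perm_big _ pe) big_cons /= in sum; rewrite sum -sP szq; clean_lia.
have rec P' d' : (size P' <= size q)%N -> (2 <= size P')%N -> uniq P' -> {subset P' <= P} ->
    (forall v, v \in P' -> 0 < d' v)%N -> (\sum_(v <- P') d' v = 2 * size P' - 2)%N ->
    realizable P' d'.
  move=> h1 h2' h3 h4 h5 h6; apply: (IH (size P')) => //.
    by move: hn h1; rewrite -sP szq; clean_lia.
  exact: ntc_sub h4 ntc.
have m2 : (2 <= size q)%N by move: h2 n3 sP; rewrite szq; clean_lia.
have dq x : x \in q -> (0 < d x)%N by move=> xq; apply: dpos; rewrite memP xq orbT.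
set A := fun i => (\sum_(x <- take i q) d x)%N.
have A0 : A 0%N = 0%N by rewrite /A take0 big_nil.
have Am : A (size q) = (\sum_(v <- q) d v)%N by rewrite /A take_size.
have AS i : (i < size q)%N -> A i.+1 = (A i + d (nth p q i))%N by move=> h; rewrite /A (take_sum _ p h).
have dn i : (i < size q)%N -> (0 < d (nth p q i))%N by move=> h; apply: dq; rewrite mem_nth.
set a := fun i => ((A i)%:Z - (2 * i)%N%:Z)%R.
have dp0 : (0 < d p)%N by apply: dpos.
have [dp2|dp1] := leqP 2 (d p).
  have c0 : (0 <= a 0%N)%R by rewrite /a A0.
  have c1 : (a (size q) < 0)%R by rewrite /a Am; move: sumq dp2; clean_lia.
  have [j [jm [h0 h1]]] := crossC c0 c1.
  rewrite /a in h0 h1.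
  have h0' : (2 * j <= A j)%N by move: h0; clean_lia.
  have h1' : (A j.+1 < 2 * j.+1)%N by move: h1; clean_lia.
  have jS := AS j jm; have dj := dn j jm.
  have Aj : A j = (2 * j)%N by clean_lia.
  have daj : d (nth p q j) = 1%N by clean_lia.
  have j1 : (j.+1 < size q)%N.
    rewrite ltn_neqAle jm andbT; apply/eqP => E.
    have := Am; rewrite -E jS Aj daj; move: sumq dp2 E; set S := (\sum_(v <- q) d v)%N; set Q := size q; clean_lia.
  apply: (case1 memP uq pw sumq dpos rec (L := take j q) (a := nth p q j) (b := nth p q j.+1) (Rr := drop j.+2 q)).
  - by rewrite -[LHS](cat_take_drop j) (drop_nth p jm) (drop_nth p j1).
  - exact dp2.
  - by rewrite size_takel ?(ltnW jm) //; exact Aj.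
  - exact daj.
have dp : d p = 1%N by clean_lia.
set c0 := nth p q 0.
have Eq0 : q = c0 :: behead q by rewrite /c0; case: (q) m2.
have [dc2|dc1] := leqP 2 (d c0).
  apply: (case2 memP uq pw sumq dpos rec (c := c0) (Rr := behead q)) => //.
  by case: (q) m2 => [|? []].
have dc0 : (0 < d c0)%N by apply: dn; clean_lia.
have A1 : A 1%N = 1%N by rewrite (AS 0%N (ltnW m2)) A0 -/c0; clean_lia.
have c0' : ((fun i => a i.+1) 0%N <= -1)%R by rewrite /a A1.
have c1' : (-1 <= (fun i => a i.+1) (size q).-1)%R.
  rewrite /= prednK ?(ltnW m2) // /a Am; move: sumq dp; set S := (\sum_(v <- q) d v)%N; set Q := size q; clean_lia.
have m1 : (0 < (size q).-1)%N by move: m2; clean_lia.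
have [i [im [h0 h1]]] := @crossU (fun i => a i.+1) (-1)%R (size q).-1 c0' c1' m1.
rewrite /a /= in h0 h1.
have jm : (i.+1 < size q)%N by clean_lia.
have jS := AS i.+1 jm.
have h0' : (A i.+1 + 1 <= 2 * i.+1)%N by move: h0; clean_lia.
have h1' : (2 * i.+2 <= A i.+2 + 1)%N by move: h1; clean_lia.
apply: (case3 memP uq pw sumq dpos rec (L := take i.+1 q) (c := nth p q i.+1) (Rr := drop i.+2 q)
   (X := (2 * i.+1 - A i.+1)%N)).
- by rewrite -[LHS](cat_take_drop i.+1) (drop_nth p jm).
- by rewrite -size_eq0 size_takel ?(ltnW jm).
- exact dp.
- clean_lia.
- clean_lia.
- rewrite size_takel ?(ltnW jm) // /A; move: h0'; rewrite /A; set S := (\sum_(x <- take i.+1 q) d x)%N; clean_lia.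
Qed.

Lemma sum_ge2 (s : seq point) (g : point -> nat) : (forall x, x \in s -> 2 <= g x)%N ->
  (\sum_(x <- s) g x = \sum_(x <- s) (g x - 2) + 2 * size s)%N.
Proof.
elim: s => [|y s IH] H; first by rewrite !big_nil.
rewrite !big_cons IH /=; last by move=> x xs; apply: H; rewrite in_cons xs orbT.
have := H y (mem_head _ _); clean_lia.
Qed.

Lemma choose_deg (Rs : seq point) (f : point -> nat) t : uniq Rs ->
  (forall x, x \in Rs -> 2 <= f x)%N -> (t <= \sum_(x <- Rs) (f x - 2))%N ->
  exists g : point -> nat, [/\ forall x, x \in Rs -> (2 <= g x <= f x)%N,
     (\sum_(x <- Rs) (g x - 2) = t)%N &
     (t = \sum_(x <- Rs) (f x - 2))%N -> forall x, x \in Rs -> g x = f x].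
Proof.
elim: Rs t => [|y rs IH] t uR Hf Ht.
  by exists f; split=> //; move: Ht; rewrite big_nil leqn0 => /eqP ->.
move: uR; rewrite cons_uniq => /andP[yr ur].
rewrite big_cons in Ht.
have Hf' x : x \in rs -> (2 <= f x)%N by move=> xr; apply: Hf; rewrite in_cons xr orbT.
have fy := Hf y (mem_head _ _).
set S := (\sum_(x <- rs) (f x - 2))%N in Ht *.
have t1S : (minn t S <= S)%N by rewrite geq_minr.
have [g [Hg1 Hg2 Hg3]] := IH (minn t S) ur Hf' t1S.
exists (fun v => if v == y then (t - minn t S + 2)%N else g v); split.
- move=> x; rewrite in_cons; case: eqP => [-> _|_ /= xr]; last exact: Hg1.
  move: Ht fy; clean_lia.
- rewrite big_cons eqxx.
  rewrite (eq_big_seq (fun x => g x - 2)%N); last first.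
    by move=> x xr; case: eqP => // E; move: yr; rewrite -E xr.
  rewrite Hg2; move: Ht; clean_lia.
- move=> tE x; rewrite in_cons; case: eqP => [-> _|_ /= xr].
    move: tE fy; rewrite big_cons -/S; clean_lia.
  apply: Hg3 => //; move: tE; rewrite big_cons -/S; clean_lia.
Qed.

End G.

Local Close Scope ring_scope.

Theorem theorem1 (R : realType) (Rs Bs : seq (point R)) (f : point R -> nat) :
  uniq Rs -> uniq Bs -> (forall x, x \in Rs -> x \notin Bs) ->
  no_three_collinear (Rs ++ Bs) ->
  (forall x, x \in Rs -> (2 <= f x)%N) ->
  (2 <= size Bs)%N ->
  (size Bs <= \sum_(x <- Rs) (f x - 2) + 2)%N ->
  exists T : seq (point R * point R),
    [/\ spanning_tree (Rs ++ Bs) T,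
        non_crossing T,
        (forall v, v \in Rs ++ Bs -> (deg T v == 1%N) = (v \in Bs)),
        (forall x, x \in Rs -> (2 <= deg T x <= f x)%N) &
        (size Bs = \sum_(x <- Rs) (f x - 2) + 2)%N ->
          forall x, x \in Rs -> deg T x = f x].
Proof.
move=> uR uB disj ntc Hf hB hS.
have ht : (size Bs - 2 <= \sum_(x <- Rs) (f x - 2))%N by clean_lia.
have [g [Hg1 Hg2 Hg3]] := choose_deg uR Hf ht.
set d := fun v => if v \in Bs then 1%N else g v.
have uP : uniq (Rs ++ Bs).
  rewrite cat_uniq uR uB andbT /=; apply/hasPn => x xB; apply/negP => xR.
  by move: (disj x xR); rewrite xB.
have dR x : x \in Rs -> d x = g x by move=> xR; rewrite /d (negbTE (disj x xR)).
have sumR : (\sum_(x <- Rs) d x = \sum_(x <- Rs) g x)%N by apply: eq_big_seq => x /dR.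
have sumB : (\sum_(x <- Bs) d x = size Bs)%N.
  by rewrite (eq_big_seq (fun=> 1%N)) ?sum1_size // => x xB; rewrite /d xB.
have g2 x : x \in Rs -> (2 <= g x)%N by move=> /Hg1 /andP[].
have [T [ST NC D]] : realizable (Rs ++ Bs) d.
  apply: (realize (n := size (Rs ++ Bs))) => //.
  - by rewrite size_cat; clean_lia.
  - move=> v; rewrite mem_cat => /orP[vR|vB]; first by rewrite dR // (leq_trans _ (g2 v vR)).
    by rewrite /d vB.
  - rewrite big_cat /= sumR sumB (sum_ge2 g2) Hg2 size_cat; clean_lia.
exists T; split=> //.
- move=> v vP; rewrite D //; case: (boolP (v \in Bs)) => vB; first by rewrite /d vB.
  have vR : v \in Rs by move: vP; rewrite mem_cat (negbTE vB) orbF.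
  by rewrite dR //; have := g2 v vR; case: (g v) => [|[|]].
- by move=> x xR; rewrite D ?mem_cat ?xR // dR // Hg1.
- move=> hE x xR; rewrite D ?mem_cat ?xR // dR // Hg3 //; clean_lia.
Qed.
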